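(* Let $a,b,c,d\in\mathbb{C}$ be the vertices, in this order, of a convex quadrilateral, and let $\alpha$ and $\gamma$ be its inner angles at $a$ and $c$. Then \[ p(a,b,c,d)\le\frac{1}{\sin\frac{\alpha+\gamma}{2}}. \]
   Context: For four distinct points $a,b,c,d\in\mathbb{C}$, $p(a,b,c,d)=\frac{|a-b||c-d|+|a-d||b-c|}{|a-c||b-d|}$. *)

(* Defs.v *)
(* complex numbers are modelled as points of R^2 (R * R). *)
From Stdlib Require Import Reals Lra.
Open Scope R_scope.

Definition pt := (R * R)%type.

Definition sub (u v : pt) : pt := (fst u - fst v, snd u - snd v).
Definition dot (u v : pt) : R := fst u * fst v + snd u * snd v.
Definition cross (u v : pt) : R := fst u * snd v - snd u * fst v.
Definition dist (u v : pt) : R := sqrt (dot (sub u v) (sub u v)).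

Definition pval (a b c d : pt) : R :=
  (dist a b * dist c d + dist a d * dist b c) / (dist a c * dist b d).

(* orientation of the triangle (p, q, r): positive iff counterclockwise *)
Definition orient (p q r : pt) : R := cross (sub q p) (sub r p).

(* a, b, c, d (in this order) are the vertices of a (non-degenerate) convex
   quadrilateral: for every edge, the two remaining vertices lie strictly on
   the same side of the edge's line, with a common orientation. *)
Definition convex_quad (a b c d : pt) : Prop :=
  (0 < orient a b c /\ 0 < orient a b d /\
   0 < orient b c d /\ 0 < orient b c a /\
   0 < orient c d a /\ 0 < orient c d b /\
   0 < orient d a b /\ 0 < orient d a c) \/
  (orient a b c < 0 /\ orient a b d < 0 /\
   orient b c d < 0 /\ orient b c a < 0 /\
   orient c d a < 0 /\ orient c d b < 0 /\
   orient d a b < 0 /\ orient d a c < 0).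

Definition angle (p v q : pt) : R :=
  acos (dot (sub p v) (sub q v) / (dist p v * dist q v)).

(* Main.v *)
Require Import Defs.
From Stdlib Require Import Reals Lra Psatz.
Open Scope R_scope.

Lemma dot_nn (x : pt) : 0 <= dot x x.
Proof. destruct x as [x1 x2]; unfold dot; simpl; nra. Qed.

Lemma dist_sq u v : Defs.dist u v * Defs.dist u v = dot (sub u v) (sub u v).
Proof. unfold Defs.dist. apply sqrt_sqrt, dot_nn. Qed.

Lemma dist_sym u v : Defs.dist u v = Defs.dist v u.
Proof. unfold Defs.dist. f_equal. destruct u, v; unfold dot, sub; simpl; ring. Qed.

Lemma dist_nn u v : 0 <= Defs.dist u v.
Proof. apply sqrt_pos. Qed.

Lemma cross_nz x y : cross x y <> 0 -> 0 < dot x x /\ 0 < dot y y.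
Proof.
  destruct x as [x1 x2], y as [y1 y2]; unfold cross, dot; simpl; intro h.
  split.
  - destruct (Req_dec (x1*x1+x2*x2) 0) as [e|e]; [|nra].
    assert (x1 = 0) by nra. assert (x2 = 0) by nra. subst. exfalso; apply h; ring.
  - destruct (Req_dec (y1*y1+y2*y2) 0) as [e|e]; [|nra].
    assert (y1 = 0) by nra. assert (y2 = 0) by nra. subst. exfalso; apply h; ring.
Qed.

Lemma dist_pos_of u v : 0 < dot (sub u v) (sub u v) -> 0 < Defs.dist u v.
Proof. intro h. unfold Defs.dist. apply sqrt_lt_R0; exact h. Qed.

Lemma orient_nz u v w : orient u v w <> 0 ->
  0 < Defs.dist u v /\ 0 < Defs.dist u w /\ 0 < Defs.dist v w.
Proof.
  intro h. unfold orient in h.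
  destruct (cross_nz _ _ h) as [h1 h2].
  assert (h3 : cross (sub w v) (sub u v) <> 0).
  { intro e; apply h. rewrite <- e. destruct u, v, w; unfold cross, sub; simpl; ring. }
  destruct (cross_nz _ _ h3) as [h4 _].
  repeat split; apply dist_pos_of.
  - replace (dot (sub u v) (sub u v)) with (dot (sub v u) (sub v u)); auto.
    destruct u, v; unfold dot, sub; simpl; ring.
  - replace (dot (sub u w) (sub u w)) with (dot (sub w u) (sub w u)); auto.
    destruct u, w; unfold dot, sub; simpl; ring.
  - replace (dot (sub v w) (sub v w)) with (dot (sub w v) (sub w v)); auto.
    destruct v, w; unfold dot, sub; simpl; ring.
Qed.

Lemma lagrange x y : dot x y * dot x y + cross x y * cross x y = dot x x * dot y y.
Proof. destruct x, y; unfold dot, cross; simpl; ring. Qed.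

Lemma angle_facts dt cr N : 0 < N -> dt*dt + cr*cr = N*N ->
  -1 <= dt/N <= 1 /\ cos (acos (dt/N)) = dt/N /\
  sin (acos (dt/N)) * sin (acos (dt/N)) = (cr/N)*(cr/N) /\ 0 <= sin (acos (dt/N)).
Proof.
  intros hN h.
  assert (hx : dt/N * (dt/N) <= 1).
  { replace (dt/N*(dt/N)) with ((dt*dt)/(N*N)) by (field; lra).
    apply (Rmult_le_reg_r (N*N)). nra. unfold Rdiv. rewrite Rmult_assoc, Rinv_l; nra. }
  assert (hb : -1 <= dt/N <= 1) by nra.
  split; [exact hb|]. split; [apply cos_acos; exact hb|].
  rewrite sin_acos by exact hb. split.
  - rewrite sqrt_sqrt.
    + unfold Rsqr. field_simplify_eq; [nra | lra].
    + unfold Rsqr. lra.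
  - apply sqrt_pos.
Qed.

Lemma sq_eq u v : 0 <= u -> 0 <= v -> u*u = v*v -> u = v.
Proof. intros. nra. Qed.
Lemma main_alg X Y P Q K sS :
  0<X -> 0<Y -> 0<P -> 0<Q -> 0<=sS ->
  P*P*(Q*Q) = X*X+Y*Y-2*K -> K*K <= X*X*(Y*Y) -> K < X*Y ->
  sS*sS = (1 - K/(X*Y))/2 ->
  (X+Y)/(P*Q) <= 1/sS.
Proof.
  intros hX hY hP hQ hs hPQ hK hK2 hS.
  assert (hXY: 0 < X*Y) by nra.
  assert (h2: 2*(X*Y)*(sS*sS) = X*Y - K).
  { rewrite hS. field. lra. }
  assert (hs': 0 < sS).
  { destruct hs as [h|h]; auto. subst. nra. }
  assert (hKm: - (X*Y) <= K) by nra.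
  assert (hsq: ((X+Y)*sS)*((X+Y)*sS) <= (P*Q)*(P*Q)).
  { assert (2*(X*Y)*(((X+Y)*sS)*((X+Y)*sS)) <= 2*(X*Y)*((P*Q)*(P*Q))).
    { replace (2*(X*Y)*(((X+Y)*sS)*((X+Y)*sS))) with ((X+Y)*(X+Y)*(2*(X*Y)*(sS*sS))) by ring.
      rewrite h2. replace ((P*Q)*(P*Q)) with (P*P*(Q*Q)) by ring. rewrite hPQ.
      assert (0 <= (X-Y)*(X-Y)*(X*Y+K)) by (apply Rmult_le_pos; [apply Rle_0_sqr|lra]). lra. }
    nra. }
  assert (hl: (X+Y)*sS <= P*Q).
  { destruct (Rle_lt_dec ((X+Y)*sS) (P*Q)) as [h|h]; auto.
    assert (0 < P*Q) by (apply Rmult_lt_0_compat; lra).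
    assert (P*Q*(P*Q) < ((X+Y)*sS)*((X+Y)*sS)) by (apply Rmult_le_0_lt_compat; lra). lra. }
  assert (0 < P*Q) by (apply Rmult_lt_0_compat; lra).
  apply (Rmult_le_reg_r (P*Q*sS)). apply Rmult_lt_0_compat; lra.
  replace ((X+Y)/(P*Q)*(P*Q*sS)) with ((X+Y)*sS) by (field; lra).
  replace (1/sS*(P*Q*sS)) with (P*Q) by (field; lra). exact hl.
Qed.

Theorem proposition4p1 (a b c d : pt) :
  convex_quad a b c d ->
  pval a b c d <= 1 / sin ((angle d a b + angle b c d) / 2).
Proof.
  intro hq.
  assert (hs : orient a b c <> 0 /\ orient c d a <> 0 /\ orient a b d <> 0
               /\ 0 < orient a b d * orient c d b).
  { destruct hq as [h|h]; repeat split; try lra; nra. }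
  destruct hs as [o1 [o2 [o3 hcr]]].
  destruct (orient_nz _ _ _ o1) as [hAB [hAC hBC]].
  destruct (orient_nz _ _ _ o2) as [hCD [_ hDA]].
  destruct (orient_nz _ _ _ o3) as [_ [hAD hBD]].
  unfold pval, angle.
  rewrite (dist_sym d a), (dist_sym b a), (dist_sym d c).
  set (A := Defs.dist a b) in *. set (B := Defs.dist b c) in *.
  set (C := Defs.dist c d) in *. set (D := Defs.dist a d) in *.
  set (P := Defs.dist a c) in *. set (Q := Defs.dist b d) in *.
  assert (eA : A*A = dot (sub b a) (sub b a)).
  { unfold A; rewrite dist_sq; destruct a, b; unfold dot, sub; simpl; ring. }
  assert (eB : B*B = dot (sub b c) (sub b c)) by (unfold B; apply dist_sq).
  assert (eC : C*C = dot (sub d c) (sub d c)).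
  { unfold C; rewrite dist_sq; destruct c, d; unfold dot, sub; simpl; ring. }
  assert (eD : D*D = dot (sub d a) (sub d a)).
  { unfold D; rewrite dist_sq; destruct a, d; unfold dot, sub; simpl; ring. }
  assert (eP : P*P = dot (sub a c) (sub a c)) by (unfold P; apply dist_sq).
  assert (eQ : Q*Q = dot (sub b d) (sub b d)) by (unfold Q; apply dist_sq).
  set (dt1 := dot (sub d a) (sub b a)). set (dt2 := dot (sub b c) (sub d c)).
  set (cr1 := orient a b d) in *. set (cr2 := orient c d b) in *.
  assert (l1 : dt1*dt1 + cr1*cr1 = (D*A)*(D*A)).
  { replace ((D*A)*(D*A)) with ((D*D)*(A*A)) by ring. rewrite eD, eA.
    unfold dt1, cr1, orient. destruct a, b, d; unfold dot, cross, sub; simpl; ring. }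
  assert (l2 : dt2*dt2 + cr2*cr2 = (B*C)*(B*C)).
  { replace ((B*C)*(B*C)) with ((B*B)*(C*C)) by ring. rewrite eB, eC.
    unfold dt2, cr2, orient. destruct b, c, d; unfold dot, cross, sub; simpl; ring. }
  assert (hN1 : 0 < D*A) by (apply Rmult_lt_0_compat; lra).
  assert (hN2 : 0 < B*C) by (apply Rmult_lt_0_compat; lra).
  destruct (angle_facts dt1 cr1 (D*A) hN1 l1) as [_ [c1 [s1 s1p]]].
  destruct (angle_facts dt2 cr2 (B*C) hN2 l2) as [_ [c2 [s2 s2p]]].
  set (al := acos (dt1 / (D*A))) in *. set (ga := acos (dt2 / (B*C))) in *.
  assert (hss : sin al * sin ga = (cr1*cr2)/((A*C)*(D*B))).
  { apply sq_eq.
    - apply Rmult_le_pos; lra.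
    - unfold Rdiv. apply Rmult_le_pos; [lra|].
      left; apply Rinv_0_lt_compat. replace (A*C*(D*B)) with ((D*A)*(B*C)) by ring.
      apply Rmult_lt_0_compat; lra.
    - replace (sin al * sin ga * (sin al * sin ga))
        with ((sin al * sin al) * (sin ga * sin ga)) by ring.
      rewrite s1, s2. field. lra. }
  assert (hcos : cos (al + ga) = 1 - 2 * sin ((al+ga)/2) * sin ((al+ga)/2)).
  { rewrite <- cos_2a_sin. f_equal. field. }
  rewrite cos_plus, c1, c2, hss in hcos.
  pose proof (acos_bound (dt1 / (D*A))) as b1.
  pose proof (acos_bound (dt2 / (B*C))) as b2.
  fold al in b1. fold ga in b2.
  assert (hsp : 0 <= sin ((al+ga)/2)) by (apply sin_ge_0; lra).
  set (K := dt1*dt2 - cr1*cr2).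
  apply (main_alg (A*C) (D*B) P Q K).
  - apply Rmult_lt_0_compat; lra.
  - apply Rmult_lt_0_compat; lra.
  - lra.
  - lra.
  - exact hsp.
  - replace (P*P*(Q*Q)) with ((P*P)*(Q*Q)) by ring.
    replace (A*C*(A*C)) with ((A*A)*(C*C)) by ring.
    replace (D*B*(D*B)) with ((D*D)*(B*B)) by ring.
    rewrite eP, eQ, eA, eC, eD, eB. unfold K, dt1, dt2, cr1, cr2, orient.
    destruct a, b, c, d; unfold dot, cross, sub; simpl; ring.
  - unfold K. 
    replace (A*C*(A*C)*(D*B*(D*B))) with (((D*A)*(D*A))*((B*C)*(B*C))) by ring.
    rewrite <- l1, <- l2.
    assert (0 <= (dt1*cr2 + cr1*dt2)*(dt1*cr2 + cr1*dt2)) by apply Rle_0_sqr.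
    nra.
  - unfold K.
    assert (h1 : dt1*dt1 <= (D*A)*(D*A)) by nra.
    assert (h2 : dt2*dt2 <= (B*C)*(B*C)) by nra.
    assert (h3 : (dt1*dt2)*(dt1*dt2) <= ((D*A)*(B*C))*((D*A)*(B*C))).
    { replace ((dt1*dt2)*(dt1*dt2)) with ((dt1*dt1)*(dt2*dt2)) by ring.
      replace (((D*A)*(B*C))*((D*A)*(B*C))) with (((D*A)*(D*A))*((B*C)*(B*C))) by ring.
      apply Rmult_le_compat; nra. }
    assert (hp : 0 < (D*A)*(B*C)) by (apply Rmult_lt_0_compat; lra).
    assert (dt1*dt2 <= (D*A)*(B*C)) by nra.
    replace (A*C*(D*B)) with ((D*A)*(B*C)) by ring. lra.
  - assert (0 < A*C*(D*B)).
    { replace (A*C*(D*B)) with ((D*A)*(B*C)) by ring. apply Rmult_lt_0_compat; lra. }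
    unfold K. replace ((dt1*dt2 - cr1*cr2)/(A*C*(D*B)))
      with (dt1/(D*A)*(dt2/(B*C)) - cr1*cr2/(A*C*(D*B))) by (field; lra).
    lra.
Qed.
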